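(* If $\mathbf A$ is a subdirectly irreducible algebra of type $F$, then every state-morphism algebra $(\mathbf A,\tau)$ is subdirectly irreducible.
   Context: A state-morphism on an algebra $\mathbf A$ of type $F$ is an endomorphism $\tau$ of $\mathbf A$ with $\tau\circ\tau=\tau$; $(\mathbf A,\tau)$ is a state-morphism algebra, i.e. the algebra of type $F$ extended by the unary operation $\tau$, and subdirect irreducibility refers to this extended algebra. *)

(* Defs.v *)
From mathcomp Require Import all_boot.
Set Implicit Arguments. Unset Strict Implicit. Unset Printing Implicit Defensive.

Record signature := Signature { sym : Type; arity : sym -> nat }.

Record algebra (S : signature) := Algebra {
  carrier :> Type;
  op : forall f : sym S, ('I_(arity f) -> carrier) -> carrier }.

Definition is_congruence (S : signature) (A : algebra S)
    (theta : A -> A -> Prop) : Prop :=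
  (forall a, theta a a) /\
  (forall a b, theta a b -> theta b a) /\
  (forall a b c, theta a b -> theta b c -> theta a c) /\
  (forall (f : sym S) (x y : 'I_(arity f) -> A),
      (forall i, theta (x i) (y i)) -> theta (@op S A f x) (@op S A f y)).

Definition nondiagonal (S : signature) (A : algebra S) (theta : A -> A -> Prop) :=
  exists a b : A, theta a b /\ a <> b.

Definition subdirectly_irreducible (S : signature) (A : algebra S) : Prop :=
  (exists a b : A, a <> b) /\
  exists mu : A -> A -> Prop,
    is_congruence mu /\ nondiagonal mu /\
    forall theta : A -> A -> Prop,
      is_congruence theta -> nondiagonal theta ->
      forall a b, mu a b -> theta a b.

Definition is_endomorphism (S : signature) (A : algebra S) (tau : A -> A) :=
  forall (f : sym S) (x : 'I_(arity f) -> A),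
    tau (@op S A f x) = @op S A f (fun i => tau (x i)).

Definition is_state_morphism (S : signature) (A : algebra S) (tau : A -> A) :=
  is_endomorphism tau /\ (forall a, tau (tau a) = tau a).

Definition ext_sig (S : signature) : signature :=
  Signature (fun o : option (sym S) =>
               match o with Some f => arity f | None => 1%N end).

(* The state-morphism algebra (A, tau) as an algebra of the extended type. *)
Definition sm_algebra (S : signature) (A : algebra S) (tau : A -> A)
    : algebra (ext_sig S) :=
  @Algebra (ext_sig S) (carrier A)
    (fun o => match o return ('I_(@arity (ext_sig S) o) -> carrier A) -> carrier A with
              | Some f => @op S A f
              | None => fun x => tau (x ord0)
              end).

(* Main.v *)
Require Import Defs.
From mathcomp Require Import all_boot.

Lemma ext_cong_base (S : signature) (A : algebra S) (tau : A -> A)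
  (theta : A -> A -> Prop) :
  @is_congruence _ (@sm_algebra S A tau) theta -> @is_congruence S A theta.
Proof.
move=> [H1 [H2 [H3 H4]]]; split; [exact H1|split; [exact H2|split; [exact H3|]]].
move=> f x y Hxy; exact (H4 (Some f) x y Hxy).
Qed.

Theorem theorem4p5 (S : signature) (A : algebra S) (tau : A -> A) :
  @subdirectly_irreducible S A ->
  @is_state_morphism S A tau ->
  subdirectly_irreducible (@sm_algebra S A tau).
Proof.
move=> [[a [b Hab]] [mu [Hmu [[a0 [b0 [Hm0 Hab0]]] Hmin]]]] _.
split; first by exists a, b.
exists (fun x y : A => forall theta : A -> A -> Prop,
  @is_congruence _ (@sm_algebra S A tau) theta -> @nondiagonal _ (@sm_algebra S A tau) theta -> theta x y).
split; [|split].
- split; [by move=> x th [H1 _]|split; [|split]].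
  + by move=> x y H th Hc Hn; case: (Hc) => _ [H2 _]; apply: H2; apply: H.
  + move=> x y z Hxy Hyz th Hc Hn; case: (Hc) => _ [_ [H3 _]].
    by apply: (H3 _ y); [apply: Hxy|apply: Hyz].
  + move=> f x y Hxy th Hc Hn; case: (Hc) => _ [_ [_ H4]].
    by apply: H4 => i; apply: Hxy.
- exists a0, b0; split; last exact Hab0.
  move=> th Hc Hn; exact (Hmin th (@ext_cong_base S A tau th Hc) Hn a0 b0 Hm0).
- by move=> th Hc Hn x y H; apply: H.
Qed.
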